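(* Let $G$ be a connected threshold graph of order $n\ge 4$ and size $m$ with $n-1<m<\binom{n}{2}$, with $c$ type 1 vertices, forward one position sequence $(f_1,\ldots,f_c)$ and numbers $F_p$ as in the context. Let $\Phi\in\mathbb{R}^{c\times c}$ be given by $\Phi_{ij}=f_{\min\{i,j\}}$ and let $\mathbf{1}\in\mathbb{R}^{c}$ be the all-ones vector. Then $F_p=\mathbf{1}^\intercal\Phi^p\mathbf{1}$ for every $p\in\mathbb{N}_0$.
   Context: A threshold graph is a simple graph whose vertices can be ordered $v_1,\ldots,v_n$ so that for each $2\le i\le n$, $v_i$ is either adjacent to all of $v_1,\ldots,v_{i-1}$ (then $a_i=1$) or to none of them (then $a_i=0$); by convention $a_1=1$. Vertex $v_i$ is of type 1 if $a_i=1$ and of type 0 if $a_i=0$; $c$ and $z$ are the numbers of type 1 and type 0 vertices. The backwards zero position sequence $(b_1,\ldots,b_z)$: $b_i$ is the number of type 1 vertices appearing after the $i$-th type 0 vertex in the order $v_1,\ldots,v_n$. The forward one position sequence $(f_1,\ldots,f_c)$: $f_i$ is the number of type 0 vertices appearing before the $i$-th type 1 vertex in the order $v_1,\ldots,v_n$. Define $F_0=c$ and for $p\ge1$, $F_p=\sum_{i_1,\ldots,i_p=1}^{z} b_{i_1}\min\{b_{i_1},b_{i_2}\}\cdots\min\{b_{i_{p-1}},b_{i_p}\}\,b_{i_p}$ (with $F_1=\sum_i b_i^2$); $F_p$ equals the number of lazy walks in $G$ whose type sequence is $1\,0^{s_1}\,1\cdots1\,0^{s_p}\,1$ for any fixed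 $s_1,\ldots,s_p\ge1$. *)

(* Defs.v *)
From mathcomp Require Import all_boot all_order all_algebra.
Set Implicit Arguments. Unset Strict Implicit. Unset Printing Implicit Defensive.
Import GRing.Theory Num.Theory.

(* A threshold graph is given by its creation sequence a = [a_1; ...; a_n]
   (0-indexed here: vertex v_(i+1) is the ordinal i : 'I_n, its type is
   nth false a i, true = type 1).  By convention a_1 = 1. *)

Definition ttype (a : seq bool) (i : nat) : bool := nth false a i.

Definition tadj (a : seq bool) : rel 'I_(size a) :=
  fun i j => (i != j) && ttype a (maxn i j).
Arguments tadj : clear implicits.

Definition tconnected (a : seq bool) : Prop :=
  forall i j : 'I_(size a), connect (tadj a) i j.

Definition th_size (a : seq bool) : nat :=
  #|[set e : 'I_(size a) * 'I_(size a) | (e.1 < e.2)%N && tadj a e.1 e.2]|.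

Definition nb_one (a : seq bool) : nat := count id a.
Definition nb_zero (a : seq bool) : nat := count negb a.

Definition zero_pos (a : seq bool) : seq nat :=
  [seq i <- iota 0 (size a) | ~~ ttype a i].
Definition one_pos (a : seq bool) : seq nat :=
  [seq i <- iota 0 (size a) | ttype a i].

Definition bzps (a : seq bool) : seq nat :=
  [seq count id (drop i.+1 a) | i <- zero_pos a].
Definition fops (a : seq bool) : seq nat :=
  [seq count negb (take i a) | i <- one_pos a].

Definition th_F (a : seq bool) (p : nat) : nat :=
  match p with
  | 0 => nb_one a
  | q.+1 =>
      let b := fun i : 'I_(nb_zero a) => nth 0 (bzps a) i in
      \sum_(t : {ffun 'I_q.+1 -> 'I_(nb_zero a)})
        (b (t ord0) *
         (\prod_(k < q) minn (b (t (widen_ord (leqnSn q) k))) (b (t (lift ord0 k))))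
         * b (t ord_max))
  end.

Definition th_Phi (R : nzRingType) (a : seq bool) : 'M[R]_(nb_one a) :=
  \matrix_(i, j) (((nth 0 (fops a) (minn i j))%:R)%R).

Definition th_ones (R : nzRingType) (k : nat) : 'cV[R]_k := const_mx 1%R.

(* Main.v *)
Require Import Defs.
From mathcomp Require Import all_boot all_order all_algebra.
From mathcomp Require Import all_classical all_reals.
Set Implicit Arguments. Unset Strict Implicit. Unset Printing Implicit Defensive.
Import GRing.Theory Num.Theory.
Local Open Scope ring_scope.

Definition fcons (I : finType) q (x : I) (t : {ffun 'I_q -> I}) : {ffun 'I_q.+1 -> I} :=
  [ffun k => match unlift ord0 k with Some k' => t k' | None => x end].

Lemma fcons0 (I : finType) q x (t : {ffun 'I_q -> I}) : fcons x t ord0 = x.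
Proof. by rewrite ffunE unlift_none. Qed.

Lemma fconsS (I : finType) q x (t : {ffun 'I_q -> I}) j : fcons x t (lift ord0 j) = t j.
Proof. by rewrite ffunE liftK. Qed.

Lemma sum_ffunS (R : nmodType) (I : finType) q (F : {ffun 'I_q.+1 -> I} -> R) :
  \sum_t F t = \sum_x \sum_(t : {ffun 'I_q -> I}) F (fcons x t).
Proof.
rewrite pair_big /=.
rewrite (reindex (fun p : I * {ffun 'I_q -> I} => fcons p.1 p.2)) //=.
exists (fun t : {ffun 'I_q.+1 -> I} => (t ord0, [ffun k => t (lift ord0 k)])) => [[x t] _|t _] /=.
  by rewrite fcons0; congr pair; apply/ffunP => k; rewrite ffunE fconsS.
apply/ffunP => k; rewrite ffunE; case: unliftP => [j ->|->] //.
by rewrite ffunE.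
Qed.

Section Walk.
Variables (R : comNzRingType) (z : nat) (M : 'M[R]_z).

Lemma walk q : forall (u : 'rV[R]_z) (v : 'cV[R]_z),
 \sum_(t : {ffun 'I_q.+1 -> 'I_z}) (u 0 (t ord0) *
     (\prod_(k < q) M (t (widen_ord (leqnSn q) k)) (t (lift ord0 k))) * v (t ord_max) 0)
 = (u *m M ^+ q *m v) 0 0.
Proof.
elim: q => [|q IH] u v.
  rewrite expr0 mulmx1 mxE sum_ffunS; apply: eq_bigr => x _.
  have -> : (ord_max : 'I_1) = ord0 by apply: val_inj.
  rewrite (eq_bigr (fun _ => u 0 x * v x 0)); last first.
    by move=> t _; rewrite big_ord0 mulr1 fcons0.
  by rewrite big_const card_ffun !card_ord expn0 /= addr0.
rewrite exprS -mulmxE mulmxA -IH sum_ffunS exchange_big /=.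
apply: eq_bigr => t _.
have -> : (ord_max : 'I_q.+2) = lift ord0 ord_max by apply: val_inj.
rewrite mxE big_distrl /= big_distrl /=; apply: eq_bigr => x _.
rewrite big_ord_recl fcons0 fconsS.
have -> : widen_ord (leqnSn q.+1) ord0 = ord0 by apply: val_inj.
rewrite fcons0.
rewrite fconsS -!mulrA; congr (_ * (_ * (_ * _))); apply: eq_bigr => k _.
have -> : widen_ord (leqnSn q.+1) (lift ord0 k) = lift ord0 (widen_ord (leqnSn q) k) by apply: val_inj.
by rewrite !fconsS.
Qed.
End Walk.

Lemma pow_BBt (R : comNzRingType) c z (B : 'M[R]_(c, z)) q :
  (B *m B^T) ^+ q.+1 = B *m (B^T *m B) ^+ q *m B^T.
Proof.
elim: q => [|q IH]; first by rewrite expr1 expr0 mulmx1.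
by rewrite exprS IH -mulmxE exprS -mulmxE !mulmxA.
Qed.

Local Open Scope nat_scope.
Lemma count_take_sum (T : Type) (x0 : T) (P : pred T) s m :
  count P (take m s) = \sum_(j < size s) (P (nth x0 s j) && (j < m)).
Proof.
elim: s m => [|x s IH] m /=; first by rewrite big_ord0.
rewrite big_ord_recl /=; case: m => [|m] /=.
  by rewrite big1 ?andbF // => j _; rewrite andbF.
by rewrite (IH m) andbT.
Qed.

Lemma count_drop_sum (T : Type) (x0 : T) (P : pred T) s m :
  count P (drop m s) = \sum_(j < size s) (P (nth x0 s j) && (m <= j)).
Proof.
elim: s m => [|x s IH] m /=; first by rewrite big_ord0.
rewrite big_ord_recl /=; case: m => [|m] /=.
  rewrite andbT -{1}(take_size s) (count_take_sum x0 P s (size s)); congr (_ + _).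
  by apply: eq_bigr => j _; rewrite ltn_ord andbT.
by rewrite IH andbF add0n.
Qed.

Lemma sum_nth (R : nmodType) (s : seq nat) N (F : nat -> R) :
  size s = N -> (\sum_(k < N) F (nth 0 s k) = \sum_(x <- s) F x)%R.
Proof. by move<-; rewrite [RHS](big_nth 0) big_mkord. Qed.

Lemma sum_filter_iota (R : nmodType) (P : pred nat) n (F : nat -> R) :
  (\sum_(x <- [seq i <- iota 0 n | P i]) F x = \sum_(j < n | P j) F j)%R.
Proof. by rewrite big_filter -{1}(subn0 n) -/(index_iota 0 n) big_mkord. Qed.

Local Open Scope nat_scope.
Lemma count_iota_nth (a : seq bool) (P : pred bool) :
  count (fun i => P (nth false a i)) (iota 0 (size a)) = count P a.
Proof. by rewrite -[in RHS](mkseq_nth false a) /mkseq count_map. Qed.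

Lemma size_one_pos a : size (one_pos a) = nb_one a.
Proof. by rewrite /one_pos size_filter /ttype (count_iota_nth a id). Qed.

Lemma size_zero_pos a : size (zero_pos a) = nb_zero a.
Proof. by rewrite /zero_pos size_filter /ttype (count_iota_nth a negb). Qed.

Lemma cnt_drop a m : count id (drop m.+1 a) = \sum_(j < size a | ttype a j) (m < j).
Proof.
rewrite (count_drop_sum false) [RHS]big_mkcond /=; apply: eq_bigr => j _.
by rewrite /ttype; case: (nth false a j).
Qed.

Lemma cnt_take a m : count negb (take m a) = \sum_(j < size a | ~~ ttype a j) (j < m).
Proof.
rewrite (count_take_sum false) [RHS]big_mkcond /=; apply: eq_bigr => j _.
by rewrite /ttype; case: (nth false a j).
Qed.

Lemma sumo (R : nmodType) a (F : nat -> R) :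
  (\sum_(k < nb_one a) F (nth 0 (one_pos a) k) = \sum_(j < size a | ttype a j) F j)%R.
Proof. by rewrite (sum_nth F (size_one_pos a)) sum_filter_iota. Qed.

Lemma sumz (R : nmodType) a (F : nat -> R) :
  (\sum_(k < nb_zero a) F (nth 0 (zero_pos a) k) = \sum_(j < size a | ~~ ttype a j) F j)%R.
Proof. by rewrite (sum_nth F (size_zero_pos a)) sum_filter_iota. Qed.

Lemma one_pos_mono a i j : i <= j -> j < nb_one a ->
  nth 0 (one_pos a) i <= nth 0 (one_pos a) j.
Proof.
move=> lij ljn.
apply: (sorted_leq_nth leq_trans leqnn 0); rewrite ?inE ?size_one_pos //.
  by apply: sorted_filter; [exact: leq_trans | exact: iota_sorted].
exact: leq_ltn_trans ljn.
Qed.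

Lemma one_pos_min a i j : i < nb_one a -> j < nb_one a ->
  nth 0 (one_pos a) (minn i j) = minn (nth 0 (one_pos a) i) (nth 0 (one_pos a) j).
Proof.
move=> hi hj; case: (leqP i j) => hij.
  by rewrite (minn_idPl (one_pos_mono hij hj)).
by rewrite (minn_idPr (one_pos_mono (ltnW hij) hi)).
Qed.

Definition Dsum a m := \sum_(j < size a | ttype a j) (m < j).

Lemma Dsum_anti a x y : x <= y -> Dsum a y <= Dsum a x.
Proof. move=> hxy; apply: leq_sum => j _; case: (ltnP y j) => // h; by rewrite (leq_ltn_trans hxy h). Qed.

Lemma Dsum_min a x y : minn (Dsum a x) (Dsum a y) = Dsum a (maxn x y).
Proof.
case: (leqP x y) => h.
  by rewrite (minn_idPr (Dsum_anti a h)).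
by rewrite (minn_idPl (Dsum_anti a (ltnW h))).
Qed.

Local Open Scope ring_scope.

Definition Bm (R : comNzRingType) a : 'M[R]_(nb_one a, nb_zero a) :=
  \matrix_(i, k) ((nth 0%N (zero_pos a) k < nth 0%N (one_pos a) i)%N%:R).

Lemma Phi_eq (R : comNzRingType) a : th_Phi R a = Bm R a *m (Bm R a)^T.
Proof.
apply/matrixP => i j; rewrite !mxE.
under eq_bigr do rewrite !mxE -natrM mulnb -leq_min.
rewrite (sumz a (fun x => ((x < minn (nth 0%N (one_pos a) i) (nth 0%N (one_pos a) j))%N)%:R)).
rewrite (nth_map 0%N); last by rewrite size_one_pos gtn_min ltn_ord.
by rewrite one_pos_min // cnt_take natr_sum.
Qed.

Lemma bvec_eq (R : comNzRingType) a k :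
  ((Bm R a)^T *m th_ones R (nb_one a)) k 0 = (nth 0%N (bzps a) k)%:R.
Proof.
rewrite !mxE; under eq_bigr do rewrite !mxE mulr1.
rewrite (sumo a (fun x => ((nth 0%N (zero_pos a) k < x)%N)%:R)).
by rewrite (nth_map 0%N) ?size_zero_pos // cnt_drop natr_sum.
Qed.

Lemma BB_eq (R : comNzRingType) a k l :
  ((Bm R a)^T *m Bm R a) k l = (minn (nth 0%N (bzps a) k) (nth 0%N (bzps a) l))%:R.
Proof.
rewrite !mxE; under eq_bigr do rewrite !mxE -natrM mulnb -gtn_max.
rewrite (sumo a (fun x => ((maxn (nth 0%N (zero_pos a) k) (nth 0%N (zero_pos a) l) < x)%N)%:R)).
rewrite !(nth_map 0%N) ?size_zero_pos // !cnt_drop -!/(Dsum a _) Dsum_min.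
by rewrite /Dsum natr_sum.
Qed.

Theorem propositionA3 (R : realType) (a : seq bool) :
  nth false a 0 = true ->
  (4 <= size a)%N ->
  tconnected a ->
  (size a - 1 < th_size a)%N ->
  (th_size a < 'C(size a, 2))%N ->
  forall p : nat,
    (th_F a p)%:R = ((th_ones R (nb_one a))^T *m (th_Phi R a) ^+ p *m th_ones R (nb_one a)) 0 0.
Proof.
move=> _ _ _ _ _ [|q].
  rewrite /= expr0 mulmx1 !mxE; under eq_bigr do rewrite !mxE mulr1.
  by rewrite sumr_const card_ord.
rewrite Phi_eq pow_BBt.
have -> : (th_ones R (nb_one a))^T *m (Bm R a *m ((Bm R a)^T *m Bm R a) ^+ q *m (Bm R a)^T)
      *m th_ones R (nb_one a)
    = ((Bm R a)^T *m th_ones R (nb_one a))^T *m ((Bm R a)^T *m Bm R a) ^+ q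
      *m ((Bm R a)^T *m th_ones R (nb_one a)).
  by rewrite trmx_mul trmxK !mulmxA.
rewrite -walk /th_F natr_sum; apply: eq_bigr => t _.
rewrite !natrM natr_prod mxE !bvec_eq; congr (_ * _ * _).
by apply: eq_bigr => k _; rewrite BB_eq.
Qed.
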